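(* Let $G=(V,E)$ be a connected regular graph and let $p_k(x,y)$ be the $k$-step transition probabilities of simple random walk on $G$. For every $n\ge1$, the kernel $g_n(x,y)=\sum_{2^n-2\le k<2^{n+1}-2}p_k(x,y)$ is symmetric and positive semi-definite (i.e. $\sum_{x,y}f(x)g_n(x,y)f(y)\ge0$ for every finitely supported $f:V\to\mathbb{R}$). Moreover $g_n(x,y)\ge0$, $g_n(x,y)=0$ whenever $d(x,y)>2^{n+1}-2$, and, if $G$ is transient, $\sum_{n\ge1}g_n(x,y)=g(x,y)$, the Green function.
   Context: $p_0(x,y)=1_{x=y}$. $d(x,y)$ is the graph distance. The Green function is $g(x,y)=\sum_{k\ge0}p_k(x,y)$. *)

(* Defs.v *)
From HB Require Import structures.
From mathcomp Require Import all_boot all_order all_algebra.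
From mathcomp Require Import all_classical all_reals all_analysis.
Set Implicit Arguments. Unset Strict Implicit. Unset Printing Implicit Defensive.
Import Order.TTheory GRing.Theory Num.Theory numFieldNormedType.Exports.
Local Open Scope ring_scope.

(* A locally finite graph on vertex type V is given by neighbour lists N x. *)
Definition simple_graph (V : eqType) (N : V -> seq V) : Prop :=
  (forall x, uniq (N x)) /\ (forall x, x \notin N x) /\
  (forall x y, (y \in N x) = (x \in N y)).

Definition graph_regular (V : eqType) (N : V -> seq V) : Prop :=
  exists d : nat, forall x, size (N x) = d.

Definition graph_adj (V : eqType) (N : V -> seq V) : rel V := fun a b => b \in N a.

Definition graph_connected (V : eqType) (N : V -> seq V) : Prop :=
  forall x y : V, exists s : seq V, path (graph_adj N) x s /\ last x s = y.

Definition graph_dist (V : eqType) (N : V -> seq V) (x y : V) (k : nat) : Prop :=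
  (exists s : seq V, [/\ path (graph_adj N) x s, last x s = y & size s = k]) /\
  (forall s : seq V, path (graph_adj N) x s -> last x s = y -> (k <= size s)%N).

Fixpoint srw_p (R : realType) (V : eqType) (N : V -> seq V) (k : nat) (x y : V)
  : R :=
  match k with
  | 0%N => if x == y then 1 else 0
  | k'.+1 => \sum_(z <- N x) (size (N x))%:R^-1 * srw_p R N k' z y
  end.

Definition g_block (R : realType) (V : eqType) (N : V -> seq V) (n : nat) (x y : V)
  : R := \sum_((2 ^ n - 2)%N <= k < (2 ^ n.+1 - 2)%N) srw_p R N k x y.

Definition srw_transient (R : realType) (V : eqType) (N : V -> seq V) : Prop :=
  exists x : V, cvgn (series (fun k => srw_p R N k x x)).

Definition green_fn (R : realType) (V : eqType) (N : V -> seq V) (x y : V) : R :=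
  limn (series (fun k => srw_p R N k x y)).

(* Main.v *)
Require Import Defs.
From HB Require Import structures.
From mathcomp Require Import all_boot all_order all_algebra.
From mathcomp Require Import all_classical all_reals all_analysis.
From mathcomp Require Import lra.
From mathcomp Require Import zify.
Import Order.TTheory GRing.Theory Num.Theory numFieldNormedType.Exports.
Local Open Scope classical_set_scope.
Local Open Scope ring_scope.

Lemma srw_ge0 (R : realType) (V : eqType) (N : V -> seq V) k x y :
  0 <= srw_p R N k x y.
Proof.
elim: k x => [|k IH] x /=; first by case: ifP.
by apply: sumr_ge0 => z _; rewrite mulr_ge0 ?invr_ge0 ?ler0n.
Qed.

Lemma srw_CK (R : realType) (V : eqType) (N : V -> seq V) a b x z y :
  srw_p R N a x z * srw_p R N b z y <= srw_p R N (a + b) x y.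
Proof.
elim: a x => [|a IH] x /=.
  case: eqP => [->|_]; first by rewrite mul1r.
  by rewrite mul0r srw_ge0.
rewrite big_distrl /=; apply: ler_sum => w _.
by rewrite -mulrA ler_wpM2l ?invr_ge0 ?ler0n.
Qed.

Lemma sum_seq_ge (R : realType) (T : eqType) (s : seq T) (F : T -> R) z :
  z \in s -> (forall w, 0 <= F w) -> F z <= \sum_(w <- s) F w.
Proof.
move=> zs F0; rewrite (big_rem z zs) /= lerDl.
by apply: sumr_ge0.
Qed.

Lemma srw_path_pos (R : realType) (V : eqType) (N : V -> seq V) x s :
  path (graph_adj N) x s -> 0 < srw_p R N (size s) x (last x s).
Proof.
elim: s x => [|z s IH] x /=; first by rewrite eqxx.
move=> /andP [zx ps].
have Hz := IH z ps.
apply: (lt_le_trans _ (@sum_seq_ge R V (N x) (fun w => (size (N x))%:R^-1 * srw_p R N (size s) w (last z s)) z zx _)); last first.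
  by move=> w; rewrite mulr_ge0 ?invr_ge0 ?ler0n ?srw_ge0.
rewrite mulr_gt0 // invr_gt0 ltr0n.
by move: zx; rewrite /graph_adj; case: (N x).
Qed.

Lemma sum_delta (R : realType) (T : eqType) (s : seq T) (y : T) (c : R) :
  uniq s -> \sum_(z <- s) (if z == y then c else 0) = if y \in s then c else 0.
Proof.
elim: s => [|a s IH] /=; first by rewrite big_nil.
move=> /andP [nas us]; rewrite big_cons IH // in_cons.
case: (eqVneq a y) => [eay|ne]; first by subst a; rewrite (negbTE nas) addr0.
by rewrite add0r.
Qed.

Lemma mul_if1 (R : realType) (b : bool) (c : R) :
  c * (if b then 1 else 0) = if b then c else 0.
Proof. by case: b; rewrite ?mulr1 ?mulr0. Qed.

Lemma srw_S (R : realType) (V : eqType) (N : V -> seq V) k x y :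
  srw_p R N k.+1 x y = \sum_(z <- N x) (size (N x))%:R^-1 * srw_p R N k z y.
Proof. by []. Qed.

Lemma srw_right (R : realType) (V : eqType) (N : V -> seq V) (d : nat)
  (Hs : simple_graph N) (Hd : forall x, size (N x) = d) k x y :
  srw_p R N k.+1 x y = \sum_(w <- N y) d%:R^-1 * srw_p R N k x w.
Proof.
case: Hs => Hu [_ Hsym].
elim: k x y => [|k IH] x y.
  rewrite /= Hd.
  under eq_bigr do rewrite mul_if1.
  under [in RHS]eq_bigr do rewrite mul_if1 eq_sym.
  by rewrite !sum_delta // Hsym.
rewrite srw_S Hd.
under eq_bigr do rewrite IH big_distrr /=.
rewrite exchange_big /=.
apply: eq_bigr => w _.
rewrite Hd big_distrr /=.
by apply: eq_bigr => z _.
Qed.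

Lemma srw_sym (R : realType) (V : eqType) (N : V -> seq V) (d : nat)
  (Hs : simple_graph N) (Hd : forall x, size (N x) = d) k x y :
  srw_p R N k x y = srw_p R N k y x.
Proof.
elim: k x y => [|k IH] x y; first by rewrite /= eq_sym.
rewrite (@srw_right R V N d Hs Hd) srw_S Hd.
by apply: eq_bigr => z _; rewrite IH.
Qed.

Lemma srw_supp (R : realType) (V : eqType) (N : V -> seq V) k x y :
  srw_p R N k x y != 0 ->
  exists s, [/\ path (graph_adj N) x s, last x s = y & size s = k].
Proof.
elim: k x => [|k IH] x /=.
  case: (eqVneq x y) => [<-|ne]; first by exists [::].
  by rewrite eqxx.
move=> H.
have: ~~ all (fun z => srw_p R N k z y == 0) (N x).
  apply/negP => /allP A; move/negP: H; apply.
  by rewrite big1_seq // => z /andP [_ /A /eqP ->]; rewrite mulr0.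
case/allPn => z zx Hz.
have [s [ps ls ss]] := IH z Hz.
exists (z :: s); split => //=; last by rewrite ss.
by rewrite ps andbT.
Qed.

Lemma g_block_dist0 (R : realType) (V : eqType) (N : V -> seq V) n x y k :
  graph_dist N x y k -> (2 ^ n.+1 - 2 < k)%N -> g_block R N n x y = 0.
Proof.
move=> [_ Hmin] Hk.
rewrite /g_block big1_seq // => j /andP [_].
rewrite mem_index_iota => /andP [_ Hj].
apply/eqP; apply/negPn/negP => /srw_supp [s [ps ls ss]].
have := Hmin s ps ls; rewrite ss => Hkj.
by move: (leq_ltn_trans Hkj Hj); rewrite ltnNge (ltnW Hk).
Qed.

Lemma srw_series_cvg (R : realType) (V : eqType) (N : V -> seq V)
  (Hconn : graph_connected N) : srw_transient R N ->
  forall x y : V, cvgn (series (fun k => srw_p R N k x y)).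
Proof.
move=> [x0 Hx0] x y.
have [s1 [p1 l1]] := Hconn x0 x.
have [s2 [p2 l2]] := Hconn y x0.
set a := size s1; set b := size s2.
have Pa := @srw_path_pos R V N x0 s1 p1; rewrite l1 in Pa.
have Pb := @srw_path_pos R V N y s2 p2; rewrite l2 in Pb.
set w := fun k => srw_p R N k x0 x0.
set C := (srw_p R N a x0 x * srw_p R N b y x0)^-1.
have HC : 0 < C by rewrite invr_gt0 mulr_gt0.
have Hle : forall k, srw_p R N k x y <= C * w (a + k + b)%N.
  move=> k; rewrite /C ler_pdivlMl ?mulr_gt0 //.
  apply: le_trans (@srw_CK R V N (a + k)%N b x0 y x0).
  rewrite mulrAC ler_wpM2r ?srw_ge0 //.
  exact: srw_CK.
have w0 : forall k, 0 <= w k by move=> k; exact: srw_ge0.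
apply: nondecreasing_is_cvgn.
  by apply: nondecreasing_series => k _ _; exact: srw_ge0.
exists (C * limn (series w)) => _ [n _ <-].
have Hnd : nondecreasing_seq (series w).
  by apply: nondecreasing_series => k _ _; exact: w0.
have Hw := nondecreasing_cvgn_le Hnd Hx0.
apply: (@le_trans _ _ (C * \sum_(0 <= k < n) w (k + (a + b))%N)).
  rewrite /series /= big_distrr /=; apply: ler_sum => k _.
  by rewrite addnA (addnC k) Hle.
apply: ler_wpM2l; first exact: ltW.
apply: le_trans (Hw (n + (a + b))%N).
have -> : \sum_(0 <= k < n) w (k + (a + b))%N = \sum_((a + b)%N <= k < n + (a + b)) w k by rewrite (big_addn 0 (n + (a + b)) (a + b)) addnK.
rewrite /series /=.
rewrite (@big_cat_nat _ _ _ (a + b)%N 0%N) //=; last by rewrite leq_addl.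
by rewrite lerDr sumr_ge0.
Qed.

Lemma g_block_partial (R : realType) (V : eqType) (N : V -> seq V) x y M :
  series (fun n => g_block R N n.+1 x y) M =
  series (fun k => srw_p R N k x y) (2 ^ M.+1 - 2)%N.
Proof.
rewrite /series /=.
elim: M => [|M IH]; first by rewrite !big_geq.
rewrite big_nat_recr //= IH /g_block.
rewrite -big_cat_nat //.
rewrite leq_sub2r // leq_exp2l //.
Qed.

Lemma green_limit (R : realType) (V : eqType) (N : V -> seq V) x y :
  cvgn (series (fun k => srw_p R N k x y)) ->
  series (fun n => g_block R N n.+1 x y) @ \oo --> green_fn R N x y.
Proof.
move=> Hc.
have -> : series (fun n => g_block R N n.+1 x y) =
  series (fun k => srw_p R N k x y) \o (fun M => (2 ^ M.+1 - 2)%N).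
  by apply/funext => M; rewrite g_block_partial.
apply: cvg_comp; last exact: Hc.
apply/cvgnyPge => A; exists A => // m /= Am.
apply: (leq_trans Am).
have H := ltn_expl m.+1 (isT : 1 < 2)%N.
move: H; set t := (2 ^ m.+1)%N => H.
by rewrite leq_subRL ?addn2 // (leq_trans _ H).
Qed.
Set Implicit Arguments. Unset Strict Implicit.

Definition Pop (R : realType) (V : eqType) (N : V -> seq V) (h : V -> R) (x : V) : R :=
  \sum_(z <- N x) (size (N x))%:R^-1 * h z.

Definition Pk (R : realType) (V : eqType) (N : V -> seq V) k (f : V -> R) : V -> R :=
  iter k (@Pop R V N) f.
Arguments Pop {R} {V} N h x.
Arguments Pk {R} {V} N k f.

Lemma sum_deltaF (R : realType) (T : eqType) (s : seq T) (y : T) (F : T -> R) :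
  uniq s -> \sum_(z <- s) (if z == y then F z else 0) = if y \in s then F y else 0.
Proof.
move=> us; rewrite -(@sum_delta R T s y (F y) us); apply: eq_bigr => z _.
by case: eqP => [->|].
Qed.

Lemma Pk_apply (R : realType) (V : eqType) (N : V -> seq V) (f : V -> R) (S : seq V)
  (HS : forall x, f x != 0 -> x \in S) k x :
  \sum_(y <- undup S) srw_p R N k x y * f y = Pk N k f x.
Proof.
elim: k x => [|k IH] x.
  rewrite /=.
  under eq_bigr do rewrite mulrC mul_if1 eq_sym.
  rewrite sum_deltaF ?undup_uniq // mem_undup.
  by case: ifP => // xS; case: (eqVneq (f x) 0) => [->//|/HS]; rewrite xS.
rewrite /Pk iterS -/(Pk N k f) /Pop.
under eq_bigr do rewrite srw_S mulr_suml.
rewrite exchange_big /=; apply: eq_bigr => z _.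
by rewrite -IH big_distrr /=; apply: eq_bigr => y _; rewrite mulrA.
Qed.

Fixpoint nball (V : eqType) (N : V -> seq V) k (S : seq V) : seq V :=
  if k is k'.+1 then @nball V N k' S ++ flatten [seq N z | z <- @nball V N k' S] else S.
Arguments nball {V} N k S.

Lemma ball_mono (V : eqType) (N : V -> seq V) S j k :
  (j <= k)%N -> {subset nball N j S <= nball N k S}.
Proof.
move=> /subnK <-; elim: (k - j)%N => [|i IH] //= x /IH.
by rewrite mem_cat => ->.
Qed.

Lemma Pk_supp (R : realType) (V : eqType) (N : V -> seq V) (Hs : simple_graph N)
  (f : V -> R) (S : seq V)
  (HS : forall x, f x != 0 -> x \in S) k x :
  Pk N k f x != 0 -> x \in nball N k S.
Proof.
case: Hs => _ [_ Hsym].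
elim: k x => [|k IH] x //=; first exact: HS.
rewrite /Pop => H.
have: ~~ all (fun z => Pk N k f z == 0) (N x).
  apply/negP => /allP A; move/negP: H; apply.
  by rewrite big1_seq // => z /andP [_ /A /eqP ->]; rewrite mulr0.
case/allPn => z zx Hz.
rewrite mem_cat; apply/orP; right; apply/flatten_mapP.
by exists z; [exact: IH | rewrite -Hsym].
Qed.

Lemma sum_restrict (R : realType) (T : eqType) (s U : seq T) (F : T -> R) :
  uniq s -> uniq U -> (forall z, F z != 0 -> z \in U) ->
  \sum_(z <- s) F z = \sum_(z <- U) (if z \in s then F z else 0).
Proof.
move=> us uU HF.
rewrite -big_mkcond -big_filter.
rewrite (bigID (mem U)) /= [X in _ + X]big1 ?addr0; last first.
  by move=> z zU; apply/eqP; apply/negPn/negP => /HF; rewrite (negbTE zU).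
rewrite -big_filter; apply: perm_big.
apply: uniq_perm; rewrite ?filter_uniq // => z.
by rewrite !mem_filter andbC.
Qed.

Lemma Pop_adj (R : realType) (V : eqType) (N : V -> seq V) (d : nat)
  (Hs : simple_graph N) (Hd : forall x, size (N x) = d) (g h : V -> R) (U : seq V)
  (Hg : forall x, g x != 0 -> x \in U) (Hh : forall x, h x != 0 -> x \in U) :
  \sum_(x <- undup U) g x * Pop N h x = \sum_(x <- undup U) Pop N g x * h x.
Proof.
have Hs' := Hs; case: Hs' => Hu [_ Hsym].
have E1 : forall x, g x * Pop N h x =
    \sum_(z <- undup U) (if z \in N x then g x * (d%:R^-1 * h z) else 0).
  move=> x; rewrite /Pop Hd big_distrr /=; apply: sum_restrict => //.
    exact: undup_uniq.
  move=> z; rewrite mem_undup => Hz; apply: Hh.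
  by apply: contraNneq Hz => ->; rewrite !mulr0.
have E2 : forall x, Pop N g x * h x =
    \sum_(z <- undup U) (if z \in N x then d%:R^-1 * g z * h x else 0).
  move=> x; rewrite /Pop Hd big_distrl /=; apply: sum_restrict => //.
    exact: undup_uniq.
  move=> z; rewrite mem_undup => Hz; apply: Hg.
  by apply: contraNneq Hz => ->; rewrite mulr0 mul0r.
under eq_bigr do rewrite E1.
under [RHS]eq_bigr do rewrite E2.
rewrite [RHS]exchange_big /=.
apply: eq_bigr => x _; apply: eq_bigr => z _.
rewrite -Hsym; case: ifP => // _.
by rewrite mulrCA mulrA.
Qed.

Lemma sum_ind_count (R : realType) (T : eqType) (s U : seq T) :
  \sum_(z <- U) (if z \in s then (1 : R) else 0) = (count (mem s) U)%:R.
Proof.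
elim: U => [|a U IH]; first by rewrite big_nil.
by rewrite big_cons IH /= natrD; case: (a \in s).
Qed.

Lemma count_le_size (T : eqType) (s U : seq T) :
  uniq U -> (count (mem s) U <= size s)%N.
Proof.
move=> uU; rewrite -size_filter; apply: uniq_leq_size; first exact: filter_uniq.
by move=> z; rewrite mem_filter => /andP [].
Qed.

Lemma IP_pos (R : realType) (V : eqType) (N : V -> seq V) (d : nat)
  (Hs : simple_graph N) (Hd : forall x, size (N x) = d) (h : V -> R) (U : seq V)
  (Hh : forall x, h x != 0 -> x \in U) :
  0 <= \sum_(x <- undup U) (h x * h x + h x * Pop N h x).
Proof.
have Hs' := Hs; case: Hs' => Hu [_ Hsym].
set U' := undup U.
have uU : uniq U' by exact: undup_uniq.
set ind := fun x z => z \in N x.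
set A := \sum_(x <- U') \sum_(z <- U') (if z \in N x then h x * h z else 0).
set Q := \sum_(x <- U') h x * h x.
have EP : \sum_(x <- U') h x * Pop N h x = d%:R^-1 * A.
  rewrite /A big_distrr /=; apply: eq_bigr => x _.
  rewrite /Pop Hd big_distrr big_distrr /=.
  rewrite (@sum_restrict R V (N x) U') //.
    apply: eq_bigr => z _; case: ifP => _; last by rewrite mulr0.
    by rewrite mulrCA.
  move=> z Hz; rewrite mem_undup; apply: Hh.
  by apply: contraNneq Hz => ->; rewrite !mulr0.
set T1 := \sum_(x <- U') \sum_(z <- U') (if z \in N x then h x * h x else 0).
have HT1 : T1 <= d%:R * Q.
  rewrite /T1 /Q big_distrr /=; apply: ler_sum => x _.
  have -> : \sum_(z <- U') (if z \in N x then h x * h x else 0) =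
    h x * h x * \sum_(z <- U') (if z \in N x then 1 else 0).
    by rewrite big_distrr /=; apply: eq_bigr => z _; rewrite mul_if1.
  rewrite sum_ind_count mulrC; apply: ler_wpM2r; first by rewrite -expr2 sqr_ge0.
  by rewrite ler_nat -(Hd x) count_le_size.
have HT3 : \sum_(x <- U') \sum_(z <- U') (if z \in N x then h z * h z else 0) = T1.
  rewrite exchange_big /=; apply: eq_bigr => x _; apply: eq_bigr => z _.
  by rewrite Hsym.
have H0 : 0 <= T1 + 2%:R * A + T1.
  rewrite -{2}HT3 /T1 /A mulr_sumr -!big_split /=.
  apply: sumr_ge0 => x _; rewrite mulr_sumr -!big_split /=.
  apply: sumr_ge0 => z _; case: ifP => _; last by rewrite mulr0 !addr0.
  have -> : h x * h x + 2%:R * (h x * h z) + h z * h z = (h x + h z) ^+ 2.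
    by rewrite sqrrD expr2 expr2 mulr_natl mulr2n.
  exact: sqr_ge0.
have HA : - (d%:R * Q) <= A.
  have : 0 <= 2%:R * (d%:R * Q + A).
    apply: le_trans H0 _; rewrite mulrDr mulr2n mulrDl mul1r.
    lra.
  move=> H; lra.
rewrite big_split /= EP.
case: (posnP d) => [d0|dpos].
  by rewrite d0 invr0 mul0r addr0 /Q sumr_ge0 // => x _; rewrite -expr2 sqr_ge0.
have Hd0 : 0 < d%:R :> R by rewrite ltr0n.
rewrite -(@pmulr_rge0 _ d%:R) // mulrDr mulrA mulfV ?gt_eqF // mul1r.
move: HA; rewrite /Q; lra.
Qed.

Lemma Pk_suppK (R : realType) (V : eqType) (N : V -> seq V) (Hs : simple_graph N)
  (f : V -> R) (S : seq V) (HS : forall x, f x != 0 -> x \in S) K k x :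
  (k <= K)%N -> Pk N k f x != 0 -> x \in nball N K S.
Proof. by move=> kK /(Pk_supp Hs HS); apply: ball_mono. Qed.

Lemma ip_shift (R : realType) (V : eqType) (N : V -> seq V) (d : nat)
  (Hs : simple_graph N) (Hd : forall x, size (N x) = d)
  (f : V -> R) (S : seq V) (HS : forall x, f x != 0 -> x \in S) K b c :
  forall a, (a + b + c <= K)%N ->
  \sum_(x <- undup (nball N K S)) Pk N a f x * Pk N (b + c) f x =
  \sum_(x <- undup (nball N K S)) Pk N (a + c) f x * Pk N b f x.
Proof.
elim: c => [|c IH] a H; first by rewrite !addn0.
rewrite addnS /Pk iterS -/(Pk N (b + c) f).
rewrite (Pop_adj Hs Hd); last 2 first.
- move=> x; apply: Pk_suppK => //; apply: leq_trans H; lia.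
- move=> x; apply: Pk_suppK => //; apply: leq_trans H.
  lia.
have -> : Pop N (iter a (Pop N) f) = Pk N a.+1 f by [].
rewrite IH; last lia.
by rewrite addSn addnS.
Qed.

Lemma pair_pos (R : realType) (V : eqType) (N : V -> seq V) (d : nat)
  (Hs : simple_graph N) (Hd : forall x, size (N x) = d)
  (f : V -> R) (S : seq V) (HS : forall x, f x != 0 -> x \in S) K i :
  (i.*2.+1 <= K)%N ->
  0 <= \sum_(x <- undup (nball N K S)) f x * Pk N i.*2 f x +
       \sum_(x <- undup (nball N K S)) f x * Pk N i.*2.+1 f x.
Proof.
move=> HK.
have HK' : (2 * i + 1 <= K)%N by rewrite mul2n addn1.
have E1 := ip_shift Hs Hd HS (K := K) (b := i) (c := i) (a := 0%N) ltac:(lia).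
have E2 := ip_shift Hs Hd HS (K := K) (b := i.+1) (c := i) (a := 0%N) ltac:(lia).
rewrite add0n in E1 E2.
rewrite -addnn -[(i + i).+1]addSn E1 E2 -big_split /=.
apply: (IP_pos Hs Hd) => x.
by apply: Pk_suppK => //; lia.
Qed.

Lemma pairs_sum (R : realType) (G : nat -> R) i L :
  (forall j, (i <= j < i + L)%N -> 0 <= G j.*2 + G j.*2.+1) ->
  0 <= \sum_(i.*2 <= k < (i.*2 + L.*2)%N) G k.
Proof.
elim: L => [|L IH] H; first by rewrite addn0 big_geq.
have -> : (i.*2 + L.+1.*2 = (i.*2 + L.*2).+2)%N by rewrite -!mul2n; lia.
rewrite big_nat_recr; last by rewrite leqW ?leq_addr.
rewrite big_nat_recr; last by rewrite leq_addr.
rewrite /= -addrA addr_ge0 //.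
  by apply: IH => j /andP [ij jL]; apply: H; rewrite ij /=; lia.
have -> : (i.*2 + L.*2 = (i + L).*2)%N by rewrite doubleD.
by apply: H; lia.
Qed.

Lemma sum_ext (R : realType) (V : eqType) (f h : V -> R) (S U : seq V)
  (HS : forall x, f x != 0 -> x \in S) : {subset S <= U} ->
  \sum_(x <- undup S) f x * h x = \sum_(x <- undup U) f x * h x.
Proof.
move=> SU.
rewrite (@sum_restrict R V (undup S) (undup U)) ?undup_uniq //; last first.
  move=> z Hz; rewrite mem_undup; apply: SU; apply: HS.
  by apply: contraNneq Hz => ->; rewrite mul0r.
apply: eq_bigr => x _; rewrite mem_undup; case: ifP => // xS.
by case: (eqVneq (f x) 0) => [->|/HS]; [rewrite mul0r | rewrite xS].
Qed.

Lemma g_block_psd (R : realType) (V : eqType) (N : V -> seq V) (d : nat)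
  (Hs : simple_graph N) (Hd : forall x, size (N x) = d) n (n1 : (1 <= n)%N)
  (f : V -> R) (S : seq V) (HS : forall x, f x != 0 -> x \in S) :
  0 <= \sum_(x <- undup S) \sum_(y <- undup S) f x * g_block R N n x y * f y.
Proof.
set K := (2 ^ n.+1 - 2)%N.
set U := nball N K S.
have E : forall x, \sum_(y <- undup S) f x * g_block R N n x y * f y =
   \sum_((2 ^ n - 2)%N <= k < K) f x * Pk N k f x.
  move=> x; rewrite -big_distrr /=.
  under eq_bigr do rewrite -mulrA.
  rewrite -big_distrr /=; congr (_ * _).
  under eq_bigr do rewrite /g_block big_distrl /=.
  rewrite exchange_big /=; apply: eq_bigr => k _.
  exact: Pk_apply.
under eq_bigr do rewrite E.
rewrite exchange_big /=.
rewrite (eq_bigr (fun k => \sum_(x <- undup U) f x * Pk N k f x)); last first.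
  move=> k _; apply: sum_ext => // x xS.
  exact: (@ball_mono V N S 0%N K (leq0n K)).
have HP : forall j, (j.*2.+1 <= K)%N -> 0 <= \sum_(x <- undup U) f x * Pk N j.*2 f x +
       \sum_(x <- undup U) f x * Pk N j.*2.+1 f x.
  by move=> j Hj; exact: (@pair_pos R V N d Hs Hd f S HS K j Hj).
clearbody U.
case: n n1 @K E HP => [//|n'] _ K E HP.
have t0 : (0 < 2 ^ n')%N by rewrite expn_gt0.
have -> : (2 ^ n'.+1 - 2 = (2 ^ n' - 1).*2)%N.
  by rewrite expnS -!mul2n; move: t0; set t := (2 ^ n')%N; lia.
have -> : K = ((2 ^ n' - 1).*2 + (2 ^ n').*2)%N.
  by rewrite /K !expnS -!mul2n; move: t0; set t := (2 ^ n')%N; lia.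
apply: pairs_sum => j /andP [jl ju].
apply: HP.
rewrite /K !expnS -!mul2n; move: t0 jl ju; set t := (2 ^ n')%N; lia.
Qed.

Theorem mainTheorem6 (R : realType) (V : eqType) (N : V -> seq V)
  (Hs : simple_graph N) (Hreg : graph_regular N) (Hconn : graph_connected N) :
  (forall n : nat, (1 <= n)%N ->
     (forall x y, g_block R N n x y = g_block R N n y x) /\
     (forall (f : V -> R) (S : seq V), (forall x, f x != 0 -> x \in S) ->
        0 <= \sum_(x <- undup S) \sum_(y <- undup S) f x * g_block R N n x y * f y) /\
     (forall x y, 0 <= g_block R N n x y) /\
     (forall x y k, graph_dist N x y k -> (2 ^ n.+1 - 2 < k)%N ->
        g_block R N n x y = 0)) /\
  (srw_transient R N -> forall x y : V,
     cvgn (series (fun k => srw_p R N k x y)) /\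
     series (fun n => g_block R N n.+1 x y) @ \oo --> green_fn R N x y).
Proof.
have [d Hd] := Hreg.
split.
  move=> n n1; split; [|split; [|split]].
  - move=> x y; rewrite /g_block; apply: eq_bigr => k _.
    exact: (@srw_sym R V N d Hs Hd).
  - move=> f S HS; exact: (@g_block_psd R V N d Hs Hd n n1 f S HS).
  - by move=> x y; rewrite /g_block; apply: sumr_ge0 => k _; exact: srw_ge0.
  - move=> x y k; exact: g_block_dist0.
move=> Ht x y.
have Hc := @srw_series_cvg R V N Hconn Ht x y.
by split => //; exact: green_limit.
Qed.
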